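(* Assume $\sigma<2\phi(0)$. Then there exists a unique $\delta^\ast\in(\delta_{\mathrm{th}},b)$ with $$\frac{\sigma}{\phi\left(\Phi^{-1}(q(\delta^\ast))\right)}\cdot\frac{e^b-e^{b-\delta^\ast}}{e^b-1}=1,$$ and $\delta^\ast$ is the unique maximizer of $G_\varphi(\delta)=\varphi(\delta)(e^\delta-1)$ over $[\delta_{\mathrm{th}},b)$. Consequently, if $\delta_{\mathrm{th}}<\delta_\beta<\delta^\ast$, then $\delta^\ast$ is the unique maximizer of the governance objective $G$ over $(0,b)$.
   Context: Parameters: $N>0$, $\sigma>0$, $b>0$, $\beta>0$. $\Phi$ and $\phi$ denote the standard normal cdf and pdf. For $\delta\in(0,b)$ let $q(\delta)=\frac{e^{b-\delta}-1}{e^b-1}\in(0,1)$ and $\varphi(\delta)=N\exp\!\left[\sigma\,\Phi^{-1}(q(\delta))-\delta-\frac{\sigma^2}{2}\right]$. Let $\delta_{\mathrm{th}}=b-\log\left(\frac{e^b+1}{2}\right)$. Let $\delta_\beta\in(0,b)$ be the unique point with $\varphi(\delta_\beta)=\beta N$ ($\varphi$ is strictly decreasing from $+\infty$ to $0$ on $(0,b)$). Let $F^\ast(\delta)=\min(\varphi(\delta),\beta N)$ and the governance objective $G(\delta)=F^\ast(\delta)(e^\delta-1)$. *)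

(* Defs.v *)
From Stdlib Require Import Reals ClassicalEpsilon.
From Coquelicot Require Import Coquelicot.
Open Scope R_scope.

Definition phi (x : R) : R := exp (- x ^ 2 / 2) / sqrt (2 * PI).

Definition Phi (x : R) : R := RInt_gen phi (Rbar_locally m_infty) (at_point x).

(* inverse of Phi: some x with Phi x = p (unique for p in (0,1)) *)
Definition Phiinv (p : R) : R :=
  epsilon (inhabits 0) (fun x => Phi x = p).

Definition q (b d : R) : R := (exp (b - d) - 1) / (exp b - 1).

Definition varphi (N sigma b d : R) : R :=
  N * exp (sigma * Phiinv (q b d) - d - sigma ^ 2 / 2).

Definition delta_th (b : R) : R := b - ln ((exp b + 1) / 2).

Definition Fstar (N sigma b beta d : R) : R := Rmin (varphi N sigma b d) (beta * N).

Definition G (N sigma b beta d : R) : R := Fstar N sigma b beta d * (exp d - 1).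

Definition Gvarphi (N sigma b d : R) : R := varphi N sigma b d * (exp d - 1).

Definition foc (sigma b d : R) : Prop :=
  sigma / phi (Phiinv (q b d)) * ((exp b - exp (b - d)) / (exp b - 1)) = 1.

(* Main.v *)
Require Import Defs.
From Stdlib Require Import Reals Lra ClassicalEpsilon.
From Coquelicot Require Import Coquelicot.
Open Scope R_scope.
Definition gf (t : R) := exp (- (t * t)).
Definition EE (y : R) := RInt gf 0 y.
Definition ff (u t : R) := exp (- (u * u) * (1 + t * t)) / (1 + t * t).
Definition HH (y : R) := RInt (fun t => ff y t) 0 1.

Lemma contR (f : R -> R) x : ex_derive f x -> continuous f x.
Proof. intros; apply (@ex_derive_continuous R_AbsRing R_NormedModule); auto. Qed.

Lemma exR (f : R -> R) a b : (forall z, Rmin a b <= z <= Rmax a b -> continuous f z) -> ex_RInt f a b.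
Proof. intros H; exact (@ex_RInt_continuous R_CompleteNormedModule f a b H). Qed.

Lemma gf_cont x : continuous gf x.
Proof. apply contR. unfold gf; auto_derive; auto. Qed.

Lemma gf_ex a b : ex_RInt gf a b.
Proof. apply exR; intros; apply gf_cont. Qed.

Lemma EE_derive y : is_derive EE y (gf y).
Proof.
  apply (@is_derive_RInt R_CompleteNormedModule gf EE 0 y).
  - apply filter_forall. intros b. unfold EE. apply (@RInt_correct R_CompleteNormedModule), gf_ex.
  - apply gf_cont.
Qed.

Lemma opt_pos t : 0 < 1 + t * t.
Proof. nra. Qed.

Lemma ff_derive u t : is_derive (fun u => ff u t) u (-2 * u * exp (- (u*u) * (1 + t*t))).
Proof.
  unfold ff. auto_derive.
  - pose proof (opt_pos t); lra.
  - field. pose proof (opt_pos t); lra.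
Qed.

Lemma ff_cont y t : continuous (fun t => ff y t) t.
Proof. apply contR. unfold ff; auto_derive. pose proof (opt_pos t); lra. Qed.

Lemma HH_derive y : is_derive HH y (-2 * exp (-(y*y)) * EE y).
Proof.
  assert (H1 : is_derive HH y (RInt (fun t => Derive (fun u => ff u t) y) 0 1)).
  { apply (is_derive_RInt_param ff 0 1 y).
    - apply filter_forall. intros x t _. eexists. apply ff_derive.
    - intros t _.
      apply continuity_2d_pt_ext with (f := fun u v => -2 * u * exp (- (u*u) * (1 + v*v))).
      { intros x0 y0. symmetry. apply is_derive_unique, ff_derive. }
      apply continuity_2d_pt_mult.
      + apply continuity_2d_pt_mult. apply continuity_2d_pt_const. apply continuity_2d_pt_id1.
      + apply continuity_1d_2d_pt_comp. apply derivable_continuous_pt, derivable_pt_exp.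
        apply continuity_2d_pt_mult.
        * apply continuity_2d_pt_opp, continuity_2d_pt_mult; apply continuity_2d_pt_id1.
        * apply continuity_2d_pt_plus. apply continuity_2d_pt_const.
          apply continuity_2d_pt_mult; apply continuity_2d_pt_id2.
    - apply filter_forall. intros x. apply exR. intros; apply ff_cont. }
  replace (-2 * exp (-(y*y)) * EE y) with (RInt (fun t => Derive (fun u => ff u t) y) 0 1); auto.
  rewrite (RInt_ext _ (fun t => scal (-2 * exp (-(y*y))) (scal y (gf (y * t + 0))))).
  2:{ intros x _. erewrite is_derive_unique; [| apply ff_derive].
      unfold scal; simpl; unfold mult; simpl. unfold gf.
      replace (- (y * y) * (1 + x * x)) with (- (y*y) + - ((y*x+0)*(y*x+0))) by ring.
      rewrite exp_plus. ring. }
  rewrite (@RInt_scal R_CompleteNormedModule).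
  2:{ apply exR. intros z _. unfold scal; simpl; unfold mult; simpl.
      apply contR. unfold gf; auto_derive; auto. }
  rewrite (@RInt_comp_lin R_CompleteNormedModule). 2: apply gf_ex.
  unfold EE, scal; simpl; unfold mult; simpl. f_equal. f_equal; ring.
Qed.

Lemma KK_const y : EE y * EE y + HH y = EE 0 * EE 0 + HH 0.
Proof.
  assert (D : forall x, is_derive (fun y => EE y * EE y + HH y) x 0).
  { intros x.
    assert (A := @is_derive_mult R_AbsRing EE EE x (gf x) (gf x) (EE_derive x) (EE_derive x) ltac:(intros; apply Rmult_comm)).
    assert (B := @is_derive_plus R_AbsRing R_NormedModule _ HH x _ _ A (HH_derive x)).
    replace 0 with (plus (plus (mult (gf x) (EE x)) (mult (EE x) (gf x))) (-2 * exp (-(x*x)) * EE x)).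
    exact B. unfold plus, mult; simpl. unfold gf; ring. }
  pose proof (is_RInt_derive (fun y => EE y * EE y + HH y) (fun _ => 0) 0 y
     (fun x _ => D x) (fun x _ => continuous_const 0 x)) as I.
  pose proof (is_RInt_unique _ _ _ _ I) as U.
  rewrite RInt_const in U. unfold scal, minus, plus, opp in U; simpl in U; unfold mult in U; simpl in U.
  lra.
Qed.

Lemma EE0 : EE 0 = 0.
Proof. unfold EE. rewrite RInt_point. reflexivity. Qed.

Lemma HH0 : HH 0 = PI / 4.
Proof.
  unfold HH. rewrite <- atan_1.
  rewrite (RInt_ext _ (fun t => / (1 + t^2))).
  2:{ intros x _. unfold ff. replace (- (0*0) * (1 + x*x)) with 0 by ring. rewrite exp_0. simpl. field.
      pose proof (opt_pos x); lra. }
  rewrite (is_RInt_unique _ 0 1 (minus (atan 1) (atan 0))).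
  - rewrite atan_0. unfold minus, plus, opp; simpl. ring.
  - apply (@is_RInt_derive R_CompleteNormedModule).
    + intros x _. apply is_derive_Reals, derivable_pt_lim_atan.
    + intros x _. apply contR. auto_derive. pose proof (opt_pos x). simpl in *. nra.
Qed.

Lemma HH_bound y : 0 <= HH y <= exp (-(y*y)).
Proof.
  assert (ex : ex_RInt (fun t => ff y t) 0 1).
  { apply exR; intros; apply ff_cont. }
  split.
  - apply RInt_ge_0; try lra; auto. intros x _. unfold ff.
    apply Rlt_le, Rdiv_lt_0_compat. apply exp_pos. apply opt_pos.
  - replace (exp (-(y*y))) with (RInt (fun _ => exp (-(y*y))) 0 1).
    2:{ rewrite RInt_const. unfold scal; simpl; unfold mult; simpl. ring. }
    apply RInt_le; try lra; auto. apply ex_RInt_const.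
    intros x Hx. unfold ff. pose proof (opt_pos x).
    assert (exp (- (y * y) * (1 + x * x)) <= exp (-(y*y))).
    { assert (-(y*y)*(1+x*x) <= -(y*y)) by nra.
      destruct (Req_dec (- (y * y) * (1 + x * x)) (-(y*y))) as [E|E].
      rewrite E; lra. apply Rlt_le, exp_increasing. lra. }
    apply Rle_trans with (exp (- (y * y) * (1 + x * x))).
    + unfold Rdiv. rewrite <- (Rmult_1_r (exp _)) at 2.
      apply Rmult_le_compat_l. apply Rlt_le, exp_pos.
      rewrite <- Rinv_1. apply Rinv_le_contravar; nra.
    + auto.
Qed.

Lemma EE_ge0 y : 0 <= y -> 0 <= EE y.
Proof.
  intros Hy. unfold EE. apply RInt_ge_0; auto. apply gf_ex.
  intros; unfold gf; apply Rlt_le, exp_pos.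
Qed.

Lemma EE_sq y : EE y * EE y = PI / 4 - HH y.
Proof. pose proof (KK_const y). rewrite EE0, HH0 in H. lra. Qed.

Lemma exp_small c : 0 < c -> exists M, 0 <= M /\ forall y, M < y -> exp (-(y*y)) < c.
Proof.
  intros Hc. exists (sqrt (Rabs (ln c))). split. apply sqrt_pos.
  intros y Hy. rewrite <- (exp_ln c Hc). apply exp_increasing.
  pose proof (sqrt_pos (Rabs (ln c))).
  assert (sqrt (Rabs (ln c)) * sqrt (Rabs (ln c)) = Rabs (ln c)) by (apply sqrt_sqrt, Rabs_pos).
  assert (y * y > Rabs (ln c)) by nra.
  pose proof (Rle_abs (- ln c)). rewrite Rabs_Ropp in H2. lra.
Qed.

Lemma PI_pos' : 0 < PI.
Proof. exact PI_RGT_0. Qed.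

Lemma EE_lim eps : 0 < eps -> exists M, forall y, M < y -> Rabs (EE y - sqrt PI / 2) < eps.
Proof.
  intros He. set (s := sqrt PI / 2).
  assert (Hs : 0 < s) by (unfold s; pose proof (sqrt_lt_R0 PI PI_pos'); lra).
  assert (Hs2 : s * s = PI / 4).
  { unfold s. replace (sqrt PI / 2 * (sqrt PI / 2)) with (sqrt PI * sqrt PI / 4) by field.
    rewrite sqrt_sqrt; [lra | pose proof PI_pos'; lra]. }
  destruct (exp_small (eps * s)) as [M [HM0 HM]]; [nra|].
  exists M. intros y Hy.
  pose proof (EE_ge0 y ltac:(lra)). pose proof (EE_sq y). pose proof (HH_bound y).
  pose proof (HM y Hy).
  assert (Rabs (EE y - s) * (EE y + s) = HH y).
  { rewrite <- (Rabs_pos_eq (EE y + s)) by lra. rewrite <- Rabs_mult.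
    replace ((EE y - s) * (EE y + s)) with (- HH y) by nra.
    rewrite Rabs_Ropp. apply Rabs_pos_eq; lra. }
  pose proof (Rabs_pos (EE y - s)).
  nra.
Qed.

Lemma gen_lim (f : R -> R) x l : (forall z, continuous f z) ->
  (forall eps, 0 < eps -> exists M, forall a, a < M -> Rabs (RInt f a x - l) < eps) ->
  is_RInt_gen f (Rbar_locally m_infty) (at_point x) l.
Proof.
  intros Hc Hl P [eps HP].
  destruct (Hl eps (cond_pos eps)) as [M HM].
  apply Filter_prod with (Q := fun a => a < M) (R := fun b => b = x).
  - exists M; auto.
  - reflexivity.
  - intros a b Ha Hb. subst b. exists (RInt f a x). split.
    + apply (@RInt_correct R_CompleteNormedModule). apply exR. intros; apply Hc.
    + apply HP. unfold ball; simpl; unfold AbsRing_ball, abs, minus, plus, opp; simpl.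
      apply HM; auto.
Qed.

Lemma phi_cont z : continuous phi z.
Proof. apply contR. unfold phi. auto_derive. pose proof (sqrt_lt_R0 (2*PI)) as H.
  pose proof PI_pos'. assert (0 < sqrt (2*PI)) by (apply H; lra). lra. Qed.

Lemma phi_ex a b : ex_RInt phi a b.
Proof. apply exR; intros; apply phi_cont. Qed.

Lemma sqrt2PI : sqrt (2 * PI) = sqrt 2 * sqrt PI.
Proof. apply sqrt_mult; pose proof PI_pos'; lra. Qed.

Lemma RInt_phi_a0 a : RInt phi a 0 = EE (- a / sqrt 2) / sqrt PI.
Proof.
  set (r := sqrt 2). assert (Hr : 0 < r) by (apply sqrt_lt_R0; lra).
  assert (Hr2 : r * r = 2) by (apply sqrt_sqrt; lra).
  assert (Hp : 0 < sqrt PI) by (apply sqrt_lt_R0, PI_pos').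
  rewrite (RInt_ext _ (fun t => scal (- r / sqrt (2 * PI)) (scal (- / r) (gf (- / r * t + 0))))).
  2:{ intros t _. unfold phi.
      replace (- t ^ 2 / 2) with (- ((- / r * t + 0) * (- / r * t + 0))).
      2:{ field_simplify; [|lra]. replace (r ^ 2) with 2 by (simpl; lra). reflexivity. }
      unfold gf, scal; simpl; unfold mult; simpl.
      rewrite sqrt2PI. fold r. field. split; lra. }
  rewrite (@RInt_scal R_CompleteNormedModule).
  2:{ apply exR. intros z _. unfold scal; simpl; unfold mult; simpl.
      apply contR. unfold gf; auto_derive; auto. }
  rewrite (@RInt_comp_lin R_CompleteNormedModule). 2: apply gf_ex.
  unfold scal; simpl; unfold mult; simpl.
  replace (- / r * 0 + 0) with 0 by ring.
  rewrite <- (@opp_RInt_swap R_CompleteNormedModule). 2: apply gf_ex.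
  unfold EE, opp; simpl. rewrite sqrt2PI. fold r.
  replace (- / r * a + 0) with (- a / r) by (field; lra).
  field. split; lra.
Qed.

Lemma phi_lim eps : 0 < eps -> exists M, forall a, a < M -> Rabs (RInt phi a 0 - 1/2) < eps.
Proof.
  intros He.
  set (r := sqrt 2). assert (Hr : 0 < r) by (apply sqrt_lt_R0; lra).
  assert (Hp : 0 < sqrt PI) by (apply sqrt_lt_R0, PI_pos').
  destruct (EE_lim (eps * sqrt PI)) as [M HM]; [nra|].
  exists (- r * M). intros a Ha. rewrite RInt_phi_a0. fold r.
  assert (M < - a / r).
  { apply Rmult_lt_reg_r with r; auto. unfold Rdiv. rewrite Rmult_assoc, Rinv_l; lra. }
  specialize (HM _ H).
  replace (EE (- a / r) / sqrt PI - 1 / 2) with ((EE (- a / r) - sqrt PI / 2) / sqrt PI) by (field; lra).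
  unfold Rdiv. rewrite Rabs_mult, (Rabs_pos_eq (/ sqrt PI)).
  2: apply Rlt_le, Rinv_0_lt_compat; auto.
  apply Rmult_lt_reg_r with (sqrt PI); auto. rewrite Rmult_assoc, Rinv_l; lra.
Qed.

Lemma Phi_eq x : Phi x = 1/2 + RInt phi 0 x.
Proof.
  unfold Phi. apply is_RInt_gen_unique. apply gen_lim. apply phi_cont.
  intros eps He. destruct (phi_lim eps He) as [M HM]. exists M. intros a Ha.
  rewrite <- (@RInt_Chasles R_CompleteNormedModule phi a 0 x) by apply phi_ex.
  unfold plus; simpl.
  replace (RInt phi a 0 + RInt phi 0 x - (1 / 2 + RInt phi 0 x)) with (RInt phi a 0 - 1/2) by ring.
  auto.
Qed.

Lemma phi_pos x : 0 < phi x.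
Proof. unfold phi. apply Rdiv_lt_0_compat. apply exp_pos. apply sqrt_lt_R0. pose proof PI_pos'; lra. Qed.

Lemma Phi_deriv x : is_derive Phi x (phi x).
Proof.
  apply (@is_derive_ext R_AbsRing R_NormedModule (fun x => 1/2 + RInt phi 0 x)).
  { intros; rewrite Phi_eq; reflexivity. }
  replace (phi x) with (plus 0 (phi x)) by (unfold plus; simpl; ring).
  apply (@is_derive_plus R_AbsRing R_NormedModule (fun _ => 1/2) (fun x => RInt phi 0 x)).
  apply (@is_derive_const R_AbsRing R_NormedModule).
  apply (@is_derive_RInt R_CompleteNormedModule phi (fun x => RInt phi 0 x) 0 x).
  - apply filter_forall. intros c. apply (@RInt_correct R_CompleteNormedModule), phi_ex.
  - apply phi_cont.
Qed.

Lemma Phi_cont x : continuous Phi x.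
Proof. apply contR. eexists; apply Phi_deriv. Qed.

Lemma Phi0 : Phi 0 = 1/2.
Proof. rewrite Phi_eq, RInt_point. unfold zero; simpl; ring. Qed.

Lemma Phi_lt x y : x < y -> Phi x < Phi y.
Proof.
  intros H. rewrite !Phi_eq.
  rewrite <- (@RInt_Chasles R_CompleteNormedModule phi 0 x y) by apply phi_ex.
  unfold plus; simpl.
  pose proof (RInt_gt_0 phi x y H (fun z _ => phi_pos z) (fun z _ => phi_cont z)). lra.
Qed.

Lemma Phi_le x y : x <= y -> Phi x <= Phi y.
Proof. intros [H|H]. apply Rlt_le, Phi_lt; auto. subst; lra. Qed.

Lemma Phi_inj x y : Phi x = Phi y -> x = y.
Proof.
  intros H. destruct (Rtotal_order x y) as [L|[E|L]]; auto.
  apply Phi_lt in L; lra. apply Phi_lt in L; lra.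
Qed.

Lemma Phi_small eps : 0 < eps -> exists M, forall a, a < M -> Rabs (Phi a) < eps.
Proof.
  intros He. destruct (phi_lim eps He) as [M HM]. exists M. intros a Ha.
  specialize (HM a Ha). rewrite Phi_eq.
  rewrite <- (@opp_RInt_swap R_CompleteNormedModule) by apply phi_ex.
  unfold opp; simpl.
  replace (1 / 2 + - RInt phi a 0) with (- (RInt phi a 0 - 1/2)) by ring.
  rewrite Rabs_Ropp; auto.
Qed.

Lemma Phi_pos x : 0 < Phi x.
Proof.
  set (c := Phi x - Phi (x - 1)).
  assert (Hc : 0 < c) by (unfold c; pose proof (Phi_lt (x-1) x ltac:(lra)); lra).
  destruct (Rle_or_lt (Phi x) 0) as [H|H]; auto.
  destruct (Phi_small c Hc) as [M HM].
  set (a := Rmin M (x - 1) - 1).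
  assert (a < M) by (unfold a; pose proof (Rmin_l M (x-1)); lra).
  assert (a <= x - 1) by (unfold a; pose proof (Rmin_r M (x-1)); lra).
  specialize (HM a H0). pose proof (Phi_le a (x-1) H1).
  pose proof (Rle_abs (- Phi a)). rewrite Rabs_Ropp in H3. unfold c in *. lra.
Qed.

Lemma Phiinv_spec p : 0 < p <= 1/2 -> Phi (Phiinv p) = p /\ Phiinv p <= 0.
Proof.
  intros Hp.
  assert (Ex : exists x, Phi x = p).
  { destruct (Req_dec p (1/2)) as [E|E]. exists 0. rewrite Phi0; auto.
    destruct (Phi_small p ltac:(lra)) as [M HM].
    set (a := Rmin M 0 - 1).
    assert (a < M) by (unfold a; pose proof (Rmin_l M 0); lra).
    assert (a < 0) by (unfold a; pose proof (Rmin_r M 0); lra).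
    specialize (HM a H). pose proof (Rle_abs (Phi a)).
    destruct (IVT (fun x => Phi x - p) a 0) as [z [_ Hz]].
    - intros z. apply (proj2 (continuity_pt_filterlim _ _)). apply (contR (fun x => Phi x - p) z). auto_derive. eexists; apply Phi_deriv.
    - auto.
    - lra.
    - rewrite Phi0; lra.
    - exists z; lra. }
  pose proof (epsilon_spec (inhabits 0) (fun x => Phi x = p) Ex) as S.
  fold (Phiinv p) in S. split; auto.
  destruct (Rle_or_lt (Phiinv p) 0) as [L|L]; auto.
  apply Phi_lt in L. rewrite Phi0 in L. lra.
Qed.

Lemma MVT_sign (f df : R -> R) a b : a < b ->
  (forall c, a <= c <= b -> is_derive f c (df c)) ->
  exists c, a < c < b /\ f b - f a = df c * (b - a).
Proof.
  intros H D. destruct (MVT_cor2 f df a b H) as [c [E Hc]].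
  intros c Hc. apply is_derive_Reals, D; auto.
  exists c; auto.
Qed.

Lemma phi_deriv x : is_derive phi x (- x * phi x).
Proof.
  unfold phi. auto_derive.
  - pose proof (sqrt_lt_R0 (2*PI) ltac:(pose proof PI_pos'; lra)); lra.
  - replace (exp (- (x * (x * 1)) * / 2)) with (exp (- x ^ 2 / 2)) by (f_equal; simpl; field). field. pose proof (sqrt_lt_R0 (2*PI) ltac:(pose proof PI_pos'; lra)); lra.
Qed.

Lemma DPhi x : Derive (fun x => Phi x) x = phi x.
Proof. apply is_derive_unique, Phi_deriv. Qed.
Lemma Dphi x : Derive (fun x => phi x) x = - x * phi x.
Proof. apply is_derive_unique, phi_deriv. Qed.

Definition kf (s x : R) := s * (1 - Phi x) - phi x.
Definition hf (s x : R) := exp (s * x) * (1 - Phi x).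

Lemma kf_deriv s x : is_derive (kf s) x (phi x * (x - s)).
Proof.
  unfold kf. auto_derive.
  - split. eexists; apply Phi_deriv. split; auto. eexists; apply phi_deriv.
  - rewrite DPhi, Dphi. ring.
Qed.

Lemma hf_deriv s x : is_derive (hf s) x (exp (s * x) * kf s x).
Proof.
  unfold hf, kf. auto_derive.
  - eexists; apply Phi_deriv.
  - rewrite DPhi. ring.
Qed.

Lemma kf_decr s x y : 0 < s -> x < y -> y <= 0 -> kf s y < kf s x.
Proof.
  intros Hs Hxy Hy.
  destruct (MVT_sign (kf s) (fun c => phi c * (c - s)) x y Hxy) as [c [Hc E]].
  { intros c _. apply kf_deriv. }
  pose proof (phi_pos c). assert (phi c * (c - s) < 0) by nra. nra.
Qed.

Lemma phi_le_exp y : phi y <= exp (- y ^ 2 / 2).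
Proof.
  unfold phi. pose proof (exp_pos (- y ^ 2 / 2)).
  assert (1 <= sqrt (2 * PI)).
  { rewrite <- sqrt_1. apply sqrt_le_1_alt. pose proof PI2_1. lra. }
  unfold Rdiv. rewrite <- (Rmult_1_r (exp _)) at 2. apply Rmult_le_compat_l; [lra|].
  rewrite <- Rinv_1. apply Rinv_le_contravar; lra.
Qed.

Lemma kf_root s : 0 < s -> s < 2 * phi 0 ->
  exists xs, xs < 0 /\ kf s xs = 0.
Proof.
  intros Hs Hs2.
  destruct (exp_small (s/2) ltac:(lra)) as [M [HM0 HM]].
  set (y0 := - (2 * (M + 1))).
  assert (Hy0 : y0 < 0) by (unfold y0; lra).
  assert (Hk0 : 0 < kf s y0).
  { unfold kf. destruct (Phiinv_spec (1/2)) as [_ _]; [lra|].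
    pose proof (Phi_le y0 0 ltac:(lra)). rewrite Phi0 in H.
    pose proof (phi_le_exp y0).
    assert (exp (- y0 ^ 2 / 2) <= exp (- ((M+1)*(M+1)))).
    { destruct (Req_dec (- y0 ^ 2 / 2) (- ((M+1)*(M+1)))) as [E|E]. rewrite E; lra.
      apply Rlt_le, exp_increasing. unfold y0. simpl. nra. }
    pose proof (HM (M+1) ltac:(lra)). nra. }
  assert (Hk1 : kf s 0 < 0) by (unfold kf; rewrite Phi0; lra).
  destruct (IVT (fun x => - kf s x) y0 0) as [z [Hz E]].
  - intros z. apply (proj2 (continuity_pt_filterlim _ _)). apply (contR (fun x => - kf s x) z).
    auto_derive. eexists; apply kf_deriv.
  - auto.
  - lra.
  - lra.
  - exists z. assert (kf s z = 0) by lra. split; auto.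
    destruct Hz as [_ [L|L]]; auto. subst z. lra.
Qed.

Lemma hf_max s xs x : 0 < s -> xs < 0 -> kf s xs = 0 -> x <= 0 -> x <> xs -> hf s x < hf s xs.
Proof.
  intros Hs Hxs Hk Hx Hne.
  destruct (Rtotal_order x xs) as [L|[E|L]].
  - destruct (MVT_sign (hf s) (fun c => exp (s * c) * kf s c) x xs L) as [c [Hc E]].
    { intros c _. apply hf_deriv. }
    pose proof (kf_decr s c xs Hs (proj2 Hc) ltac:(lra)). pose proof (exp_pos (s * c)).
    assert (0 < exp (s * c) * kf s c) by nra. nra.
  - contradiction.
  - destruct (MVT_sign (hf s) (fun c => exp (s * c) * kf s c) xs x L) as [c [Hc E]].
    { intros c _. apply hf_deriv. }
    pose proof (kf_decr s xs c Hs (proj1 Hc) ltac:(lra)). pose proof (exp_pos (s * c)).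
    assert (exp (s * c) * kf s c < 0) by nra. nra.
Qed.

Lemma exp_le a c : a <= c -> exp a <= exp c.
Proof. intros [H|H]. apply Rlt_le, exp_increasing; auto. subst; lra. Qed.

Lemma exp_lt_inv a c : exp a < exp c -> a < c.
Proof. intros H. destruct (Rlt_or_le a c) as [L|L]; auto. apply exp_le in L. lra. Qed.

Lemma expb_gt1 b : 0 < b -> 1 < exp b.
Proof. intros H. rewrite <- exp_0. apply exp_increasing; auto. Qed.

Lemma exp_th b : 0 < b -> exp (b - delta_th b) = (exp b + 1) / 2.
Proof.
  intros Hb. unfold delta_th. replace (b - (b - ln ((exp b + 1) / 2))) with (ln ((exp b + 1) / 2)) by ring.
  apply exp_ln. pose proof (exp_pos b); lra.
Qed.

Lemma q_range b d : 0 < b -> delta_th b <= d < b ->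
  0 < q b d <= 1/2 /\ (delta_th b < d -> q b d < 1/2).
Proof.
  intros Hb [H1 H2]. pose proof (expb_gt1 b Hb). pose proof (exp_th b Hb).
  unfold q. assert (1 < exp (b - d)) by (rewrite <- exp_0; apply exp_increasing; lra).
  assert (exp (b - d) <= exp (b - delta_th b)) by (apply exp_le; lra).
  split. split. apply Rdiv_lt_0_compat; lra.
  apply Rmult_le_reg_r with (exp b - 1); [lra|]. unfold Rdiv. rewrite Rmult_assoc, Rinv_l; lra.
  intros H5. assert (exp (b - d) < exp (b - delta_th b)) by (apply exp_increasing; lra).
  apply Rmult_lt_reg_r with (exp b - 1); [lra|]. unfold Rdiv. rewrite Rmult_assoc, Rinv_l; lra.
Qed.

Lemma q_inj b d1 d2 : 0 < b -> q b d1 = q b d2 -> d1 = d2.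
Proof.
  intros Hb H. pose proof (expb_gt1 b Hb). unfold q in H.
  assert (exp (b - d1) = exp (b - d2)).
  { apply Rmult_eq_reg_r with (/ (exp b - 1)). unfold Rdiv in H. 
    assert (forall u, (u - 1) * / (exp b - 1) = u * / (exp b - 1) - / (exp b - 1)) by (intros; ring).
    rewrite H1, H1 in H. lra. apply Rinv_neq_0_compat; lra. }
  apply (f_equal ln) in H1. rewrite !ln_exp in H1. lra.
Qed.

Lemma Gv_eq N s b d : 0 < b -> Phi (Phiinv (q b d)) = q b d ->
  Gvarphi N s b d = N * exp (- (s^2/2)) * (exp b - 1) / exp b * hf s (Phiinv (q b d)).
Proof.
  intros Hb HP. pose proof (expb_gt1 b Hb).
  unfold Gvarphi, varphi, hf. rewrite HP. unfold q.
  set (X := Phiinv ((exp (b - d) - 1) / (exp b - 1))).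
  replace (s * X - d - s ^ 2 / 2) with (s * X + (- d + - (s^2/2))) by ring.
  replace (b - d) with (b + - d) by ring.
  rewrite !exp_plus.
  assert (exp (- d) * exp d = 1) by (rewrite <- exp_plus; replace (-d + d) with 0 by ring; apply exp_0).
  pose proof (exp_pos b). pose proof (exp_pos d). rewrite (exp_Ropp d). field. lra.
Qed.

Lemma foc_iff s b d : 0 < b -> Phi (Phiinv (q b d)) = q b d ->
  (foc s b d <-> kf s (Phiinv (q b d)) = 0).
Proof.
  intros Hb HP. pose proof (expb_gt1 b Hb). pose proof (phi_pos (Phiinv (q b d))).
  unfold foc, kf. rewrite HP. unfold q in *.
  set (P := phi (Phiinv ((exp (b - d) - 1) / (exp b - 1)))). fold P in H0.
  assert (E : (exp b - exp (b - d)) / (exp b - 1) = 1 - (exp (b - d) - 1) / (exp b - 1)) by (field; lra).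
  rewrite E. set (u := (exp (b - d) - 1) / (exp b - 1)).
  assert (Ee : s / P * (1 - u) * P = s * (1 - u)) by (field; lra).
  split; intros H1.
  - rewrite H1 in Ee. lra.
  - assert (s / P * (1-u) = (s*(1-u)) / P) by (field; lra). rewrite H2.
    replace (s*(1-u)) with P by lra. field; lra.
Qed.

Theorem proposition3 (N sigma b beta : R) :
  0 < N -> 0 < sigma -> 0 < b -> 0 < beta ->
  sigma < 2 * phi 0 ->
  exists dstar : R,
    (delta_th b < dstar < b /\ foc sigma b dstar /\
     (forall d, delta_th b < d < b -> foc sigma b d -> d = dstar)) /\
    (forall d, delta_th b <= d < b -> d <> dstar ->
       Gvarphi N sigma b d < Gvarphi N sigma b dstar) /\
    (forall dbeta, 0 < dbeta < b -> varphi N sigma b dbeta = beta * N ->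
       delta_th b < dbeta < dstar ->
       forall d, 0 < d < b -> d <> dstar ->
         G N sigma b beta d < G N sigma b beta dstar).
Proof.
  intros HN Hs Hb Hbeta Hsp.
  destruct (kf_root sigma Hs Hsp) as [xs [Hxs Hk]].
  pose proof (expb_gt1 b Hb) as Heb.
  set (E := exp b - 1).
  assert (HE : 0 < E) by (unfold E; lra).
  set (ps := Phi xs).
  assert (Hps0 : 0 < ps) by apply Phi_pos.
  assert (Hps1 : ps < 1/2) by (unfold ps; rewrite <- Phi0; apply Phi_lt; auto).
  set (dstar := b - ln (1 + E * ps)).
  assert (Hpos : 0 < 1 + E * ps) by nra.
  assert (Hqs : q b dstar = ps).
  { unfold q, dstar. replace (b - (b - ln (1 + E * ps))) with (ln (1 + E * ps)) by ring.
    rewrite exp_ln by auto. fold E. field. lra. }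
  pose proof (exp_th b Hb) as Hth.
  assert (Hdlt : dstar < b).
  { unfold dstar. assert (0 < ln (1 + E * ps)); [|lra].
    rewrite <- ln_1. apply ln_increasing; nra. }
  assert (Hdgt : delta_th b < dstar).
  { unfold dstar, delta_th. assert (ln (1 + E * ps) < ln ((exp b + 1) / 2)); [|lra].
    apply ln_increasing; auto. unfold E in *. nra. }
  assert (HX : forall d, delta_th b <= d < b -> Phi (Phiinv (q b d)) = q b d /\ Phiinv (q b d) <= 0).
  { intros d Hd. apply Phiinv_spec. apply (q_range b d Hb Hd). }
  assert (HXs : Phiinv (q b dstar) = xs).
  { destruct (HX dstar ltac:(lra)) as [H1 _]. apply Phi_inj. rewrite H1, Hqs. reflexivity. }
  assert (HXne : forall d, delta_th b <= d < b -> d <> dstar -> Phiinv (q b d) <> xs).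
  { intros d Hd Hne Heq. apply Hne. apply (q_inj b d dstar Hb).
    destruct (HX d Hd) as [H1 _]. rewrite <- H1, Heq, Hqs. reflexivity. }
  assert (HGmax : forall d, delta_th b <= d < b -> d <> dstar ->
       Gvarphi N sigma b d < Gvarphi N sigma b dstar).
  { intros d Hd Hne. destruct (HX d Hd) as [H1 H2]. destruct (HX dstar ltac:(lra)) as [H3 _].
    rewrite (Gv_eq N sigma b d Hb H1), (Gv_eq N sigma b dstar Hb H3), HXs.
    apply Rmult_lt_compat_l.
    - pose proof (exp_pos (- (sigma ^ 2 / 2))). pose proof (exp_pos b).
      apply Rdiv_lt_0_compat; auto. apply Rmult_lt_0_compat; auto. apply Rmult_lt_0_compat; auto.
    - apply hf_max; auto. }
  exists dstar. split; [|split].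
  - split; [lra|split].
    + destruct (HX dstar ltac:(lra)) as [H3 _]. apply (foc_iff sigma b dstar Hb H3).
      rewrite HXs; auto.
    + intros d Hd Hf. destruct (HX d ltac:(lra)) as [H1 H2].
      apply (foc_iff sigma b d Hb H1) in Hf.
      destruct (Req_dec d dstar) as [e|ne]; auto. exfalso.
      apply (HXne d ltac:(lra) ne).
      destruct (Rtotal_order (Phiinv (q b d)) xs) as [L|[e|L]]; auto.
      * pose proof (kf_decr sigma _ _ Hs L ltac:(lra)). lra.
      * pose proof (kf_decr sigma _ _ Hs L H2). lra.
  - exact HGmax.
  - intros dbeta Hdb Hvb Hdb2 d Hd Hne.
    assert (Hvs : varphi N sigma b dstar < beta * N).
    { rewrite <- Hvb. unfold varphi.
      apply Rmult_lt_compat_l; auto. apply exp_increasing.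
      destruct (HX dbeta ltac:(lra)) as [H1 _]. destruct (HX dstar ltac:(lra)) as [H3 _].
      assert (q b dstar < q b dbeta).
      { unfold q. apply Rmult_lt_compat_r. apply Rinv_0_lt_compat; lra.
        assert (exp (b - dstar) < exp (b - dbeta)) by (apply exp_increasing; lra). lra. }
      assert (Phiinv (q b dstar) < Phiinv (q b dbeta)).
      { destruct (Rlt_or_le (Phiinv (q b dstar)) (Phiinv (q b dbeta))) as [L|L]; auto.
        apply Phi_le in L. lra. }
      nra. }
    assert (HGs : G N sigma b beta dstar = Gvarphi N sigma b dstar).
    { unfold G, Gvarphi, Fstar. rewrite Rmin_left; lra. }
    rewrite HGs.
    assert (Hed : 0 < exp d - 1) by (rewrite <- exp_0 at 1; pose proof (exp_increasing 0 d (proj1 Hd)); lra).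
    destruct (Rlt_or_le d dbeta) as [L|L].
    + assert (A1 : G N sigma b beta d <= beta * N * (exp d - 1)).
      { unfold G, Fstar. apply Rmult_le_compat_r; [lra|]. apply Rmin_r. }
      assert (A2 : beta * N * (exp d - 1) < beta * N * (exp dbeta - 1)).
      { apply Rmult_lt_compat_l; [nra|]. pose proof (exp_increasing _ _ L). lra. }
      assert (A3 : Gvarphi N sigma b dbeta < Gvarphi N sigma b dstar) by (apply HGmax; [split; lra | intro; lra]).
      unfold Gvarphi in A3 at 1. rewrite Hvb in A3. lra.
    + assert (G N sigma b beta d <= Gvarphi N sigma b d).
      { unfold G, Gvarphi, Fstar. apply Rmult_le_compat_r; [lra|]. apply Rmin_l. }
      assert (Gvarphi N sigma b d < Gvarphi N sigma b dstar) by (apply HGmax; [split; lra | auto]).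
      lra.
Qed.
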